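(* Let $R\in\{\mathrm{ML},\mathrm{wML},\mathrm{C},\mathrm{S}\}$ and $[p,q]\in\mathscr I$. Then a path $\omega\in\Omega$ is $R$-random for $[p,q]$ if and only if it is $R$-random for at least one precise forecasting system $\varphi$ with $\varphi(s)\subseteq[p,q]$ for all $s\in\mathbb S$.
   Context: Notation: $\mathbb N=\{1,2,\dots\}$, $\mathbb N_0=\mathbb N\cup\{0\}$. $\Omega=\{0,1\}^{\mathbb N}$ is the set of paths $\omega=(\omega_1,\omega_2,\dots)$; $\omega_{1:n}=(\omega_1,\dots,\omega_n)$, $\omega_{1:0}=\square$. $\mathbb S=\bigcup_{n\in\mathbb N_0}\{0,1\}^n$ is the set of situations, $|s|$ the length, $sx$ concatenation. $\mathscr I$ is the set of closed intervals $I\subseteq[0,1]$ (singletons identified with numbers). For $r\in[0,1]$, $f:\{0,1\}\to\mathbb R$: $E_r(f)=rf(1)+(1-r)f(0)$; $\overline E_I(f)=\max_{r\in I}E_r(f)$. A forecasting system is a map $\varphi:\mathbb S\to\mathscr I$; precise if each $\varphi(s)$ is a singleton; a stationary forecasting system with constant value $I$ is identified with $I$. A real process is $F:\mathbb S\to\mathbb R$; $\Delta F(s)$ is $x\mapsto F(sx)-F(s)$. $M$ is a supermartingale for $\varphi$ if $\overline E_{\varphi(s)}(\Delta M(s))\le0$ for all $s$. A test process is a non-negative real process with $F(\square)=1$; a test supermartingale for $\varphi$ is a test process that is a supermartingale for $\varphi$. A multiplier process $D$ assigns to each $s$ a function $D(s):\{0,1\}\to[0,\infty)$ and generates the test process $F(\square)=1$,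 $F(sx)=F(s)D(s)(x)$. Computability: maps from countable effectively encoded domains to $\mathbb N_0$ or $\mathbb Q$ are recursive if Turing-computable; a real map $r$ on a domain $\mathscr D$ is lower semicomputable if $r(d)=\lim_nq(d,n)$ for a recursive rational $q$ non-decreasing in $n$, computable if $|r(d)-q(d,n)|<2^{-n}$ for a recursive rational $q$. $\mathscr F_{\mathrm{ML}}$: lower semicomputable test processes; $\mathscr F_{\mathrm{wML}}$: test processes generated by lower semicomputable multiplier processes; $\mathscr F_{\mathrm C}=\mathscr F_{\mathrm S}$: positive rational-valued recursive test processes. $\overline{\mathbb T}_R(\varphi)$: elements of $\mathscr F_R$ that are test supermartingales for $\varphi$. For $R\in\{\mathrm{ML},\mathrm{wML},\mathrm C\}$, $\omega$ is $R$-random for $\varphi$ if no $T\in\overline{\mathbb T}_R(\varphi)$ has $\limsup_nT(\omega_{1:n})=\infty$. A real growth function is a computable, non-decreasing, unbounded $\tau:\mathbb N_0\to[0,\infty)$; $\omega$ is S-random for $\varphi$ if there are no $T\in\overline{\mathbb T}_{\mathrm S}(\varphi)$ and real growth function $\tau$ with $\limsup_n[T(\omega_{1:n})-\tau(n)]\ge0$. *)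

(* Defs.v *)
From Stdlib Require Import Reals List.
From Coquelicot Require Import Coquelicot.
Open Scope R_scope.

(* A path omega = (omega_1, omega_2, ...) is represented by
   w : nat -> bool with omega_{i+1} = w i.  A situation is a finite
   list of bits, in chronological order; s x is  s ++ [x].             *)
Definition sit := list bool.
Definition path := nat -> bool.

Fixpoint prefix (w : path) (n : nat) : sit :=
  match n with
  | O => nil
  | S k => prefix w k ++ (w k :: nil)
  end.

(* Turing computability, modelled by (unary) mu-recursive functions on  *)
(* nat with Cantor pairing.                                            *)
Definition cpair (x y : nat) : nat := Nat.div ((x + y) * (x + y + 1)) 2 + y.

Inductive code : Type :=
| cZero : code
| cSucc : code
| cFst : code
| cSnd : code
| cComp : code -> code -> code
| cPairF : code -> code -> code
| cRec : code -> code -> code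
| cMin : code -> code.

Inductive eval : code -> nat -> nat -> Prop :=
| ev_zero x : eval cZero x 0
| ev_succ x : eval cSucc x (S x)
| ev_fst x y : eval cFst (cpair x y) x
| ev_snd x y : eval cSnd (cpair x y) y
| ev_comp f g x y z : eval g x y -> eval f y z -> eval (cComp f g) x z
| ev_pair f g x y z : eval f x y -> eval g x z -> eval (cPairF f g) x (cpair y z)
| ev_rec0 f g x y : eval f x y -> eval (cRec f g) (cpair x 0) y
| ev_recS f g x n z y :
    eval (cRec f g) (cpair x n) z ->
    eval g (cpair x (cpair n z)) y ->
    eval (cRec f g) (cpair x (S n)) y
| ev_min f x n :
    eval f (cpair x n) 0 ->
    (forall m, (m < n)%nat -> exists k, eval f (cpair x m) (S k)) ->
    eval (cMin f) x n.

Definition recursive_nat (g : nat -> nat) : Prop :=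
  exists c : code, forall x, eval c x (g x).

Definition enc_bool (b : bool) : nat := if b then 1%nat else 0%nat.

Fixpoint enc_sit (s : sit) : nat :=
  match s with
  | nil => 0%nat
  | b :: t => S (cpair (enc_bool b) (enc_sit t))
  end.

Definition recursive_on {D : Type} (enc : D -> nat) (f : D -> nat) : Prop :=
  exists g, recursive_nat g /\ forall d, f d = g (enc d).

Definition recursive_rat {D : Type} (enc : D -> nat) (q : D -> R) : Prop :=
  exists a b c : D -> nat,
    recursive_on enc a /\ recursive_on enc b /\ recursive_on enc c /\
    forall d, q d = (INR (a d) - INR (b d)) / INR (S (c d)).

Definition enc_pair {D : Type} (enc : D -> nat) (dn : D * nat) : nat :=
  cpair (enc (fst dn)) (snd dn).

Definition lower_semicomputable {D : Type} (enc : D -> nat) (r : D -> R) : Prop :=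
  exists q : D * nat -> R,
    recursive_rat (enc_pair enc) q /\
    (forall d n, q (d, n) <= q (d, S n)) /\
    (forall d, is_lim_seq (fun n => q (d, n)) (r d)).

Definition computable_real {D : Type} (enc : D -> nat) (r : D -> R) : Prop :=
  exists q : D * nat -> R,
    recursive_rat (enc_pair enc) q /\
    (forall d n, Rabs (r d - q (d, n)) < / 2 ^ n).

Definition enc_sit_bool (sx : sit * bool) : nat :=
  cpair (enc_sit (fst sx)) (enc_bool (snd sx)).

(* A forecasting system phi : S -> I is given by its lower and upper    *)
(* endpoint functions  phi(s) = [lo s, hi s].                           *)
Definition E (r : R) (f : bool -> R) : R := r * f true + (1 - r) * f false.

(* overline E_{[a,b]}(f) = max_{r in [a,b]} E_r(f) <= 0 *)
Definition upper_E_nonpos (a b : R) (f : bool -> R) : Prop :=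
  forall r, a <= r <= b -> E r f <= 0.

Definition process := sit -> R.

Definition Delta (F : process) (s : sit) : bool -> R :=
  fun x => F (s ++ x :: nil) - F s.

Definition supermartingale (lo hi : sit -> R) (M : process) : Prop :=
  forall s, upper_E_nonpos (lo s) (hi s) (Delta M s).

Definition test_process (F : process) : Prop :=
  (forall s, 0 <= F s) /\ F nil = 1.

Definition multiplier_process (D : sit -> bool -> R) : Prop :=
  forall s x, 0 <= D s x.

Definition generated_by (D : sit -> bool -> R) (F : process) : Prop :=
  F nil = 1 /\ forall s x, F (s ++ x :: nil) = F s * D s x.

Inductive rkind : Type := ML | wML | Cr | Sr.

Definition F_class (k : rkind) (F : process) : Prop :=
  match k with
  | ML => test_process F /\ lower_semicomputable enc_sit F
  | wML => test_process F /\
           exists D, multiplier_process D /\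
             lower_semicomputable enc_sit_bool (fun sx => D (fst sx) (snd sx)) /\
             generated_by D F
  | Cr | Sr => test_process F /\ (forall s, 0 < F s) /\ recursive_rat enc_sit F
  end.

Definition test_supermartingale (k : rkind) (lo hi : sit -> R) (T : process) : Prop :=
  F_class k T /\ supermartingale lo hi T.

Definition real_growth_function (tau : nat -> R) : Prop :=
  computable_real (fun n : nat => n) tau /\
  (forall n, 0 <= tau n) /\
  (forall n, tau n <= tau (S n)) /\
  (forall M, exists n, M < tau n).

Definition random (k : rkind) (lo hi : sit -> R) (w : path) : Prop :=
  match k with
  | ML | wML | Cr =>
      ~ exists T, test_supermartingale k lo hi T /\
          LimSup_seq (fun n => T (prefix w n)) = p_infty
  | Sr =>
      ~ exists T tau, test_supermartingale Sr lo hi T /\ real_growth_function tau /\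
          Rbar_le (Finite 0) (LimSup_seq (fun n => T (prefix w n) - tau n))
  end.

(* Main.v *)
Require Import Defs.
From Stdlib Require Import Reals List.
From Coquelicot Require Import Coquelicot.
Open Scope R_scope.
From Stdlib Require Import Lia Lra Arith ClassicalEpsilon Classical FunctionalExtensionality ZArith.

Lemma tri_S k : Nat.div ((S k)*(S k + 1)) 2 = (Nat.div (k*(k+1)) 2 + S k)%nat.
Proof.
  replace (S k * (S k + 1))%nat with (k*(k+1) + (S k)*2)%nat by lia.
  rewrite Nat.div_add; lia.
Qed.

Lemma cpair_S0 y : S (cpair 0 y) = cpair (S y) 0.
Proof. unfold cpair. rewrite !Nat.add_0_r, Nat.add_0_l. rewrite (tri_S y). lia. Qed.

Lemma cpair_SS x y : S (cpair (S x) y) = cpair x (S y).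
Proof. unfold cpair. replace (x + S y)%nat with (S x + y)%nat by lia. lia. Qed.

Lemma cpair_00 : cpair 0 0 = 0%nat.
Proof. reflexivity. Qed.

Fixpoint unpair (n : nat) : nat * nat :=
  match n with
  | O => (0%nat, 0%nat)
  | S m => match unpair m with
           | (O, y) => (S y, 0%nat)
           | (S x, y) => (x, S y)
           end
  end.

Lemma cpair_unpair n : cpair (fst (unpair n)) (snd (unpair n)) = n.
Proof.
  induction n as [|m IH]; [reflexivity|].
  simpl. destruct (unpair m) as [[|x] y]; simpl in *.
  - rewrite <- cpair_S0. now rewrite IH.
  - rewrite <- cpair_SS. now rewrite IH.
Qed.

Lemma unpair_cpair x y : unpair (cpair x y) = (x, y).
Proof.
  remember (cpair x y) as n eqn:Hn. revert x y Hn.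
  induction n as [|n IH]; intros x y Hn.
  - destruct x, y.
    + reflexivity.
    + rewrite <- cpair_SS in Hn. discriminate.
    + rewrite <- cpair_S0 in Hn. discriminate.
    + rewrite <- cpair_SS in Hn. discriminate.
  - destruct y as [|y].
    + destruct x as [|x]; [discriminate|].
      rewrite <- cpair_S0 in Hn. injection Hn as Hn.
      simpl. rewrite (IH 0%nat x Hn). reflexivity.
    + rewrite <- cpair_SS in Hn. injection Hn as Hn.
      simpl. rewrite (IH (S x) y Hn). reflexivity.
Qed.

Lemma cpair_inj a b c d : cpair a b = cpair c d -> a = c /\ b = d.
Proof.
  intro H. apply (f_equal unpair) in H. rewrite !unpair_cpair in H.
  injection H; auto.
Qed.

Definition fst' (n : nat) := fst (unpair n).
Definition snd' (n : nat) := snd (unpair n).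
Lemma fst'_cpair a b : fst' (cpair a b) = a.
Proof. unfold fst'. now rewrite unpair_cpair. Qed.
Lemma snd'_cpair a b : snd' (cpair a b) = b.
Proof. unfold snd'. now rewrite unpair_cpair. Qed.
Lemma cpair_fs n : cpair (fst' n) (snd' n) = n.
Proof. apply cpair_unpair. Qed.

Ltac cpinj := repeat match goal with
  | H : cpair _ _ = cpair _ _ |- _ => apply cpair_inj in H; destruct H
  | H : S _ = S _ |- _ => injection H as H
  end; subst.

Lemma eval_det c : forall x y1 y2, eval c x y1 -> eval c x y2 -> y1 = y2.
Proof.
  induction c as [| | | |f IHf g IHg|f IHf g IHg|f IHf g IHg|f IHf]; intros x y1 y2 H1 H2.
  - inversion H1; inversion H2; subst; auto.
  - inversion H1; inversion H2; subst; auto.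
  - inversion H1; subst. inversion H2; subst. match goal with H: cpair _ _ = cpair _ _ |- _ => apply cpair_inj in H; destruct H; congruence end.
  - inversion H1; subst. inversion H2; subst. match goal with H: cpair _ _ = cpair _ _ |- _ => apply cpair_inj in H; destruct H; congruence end.
  - inversion H1; subst. inversion H2; subst.
    assert (y = y0) by eauto. subst. eauto.
  - inversion H1; subst. inversion H2; subst.
    f_equal; eauto.
  - assert (Hrec : forall n x y1 y2, eval (cRec f g) (cpair x n) y1 ->
                   eval (cRec f g) (cpair x n) y2 -> y1 = y2).
    { clear x y1 y2 H1 H2.
      induction n as [|n IHn]; intros x y1 y2 H1 H2;
        inversion H1; subst; cpinj; try discriminate;
        inversion H2; subst; cpinj; try discriminate.
      - eauto.
      - assert (z = z0) by eauto. subst. eauto. }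
    rewrite <- (cpair_fs x) in H1, H2. eauto.
  - inversion H1; subst. inversion H2; subst.
    destruct (Nat.lt_trichotomy y1 y2) as [Hl|[He|Hl]]; auto.
    + match goal with H : forall m, (m < y2)%nat -> _ |- _ => destruct (H y1 Hl) as [k Hk] end.
      match goal with H : eval f (cpair x y1) 0 |- _ => pose proof (IHf _ _ _ H Hk) end. discriminate.
    + match goal with H : forall m, (m < y1)%nat -> _ |- _ => destruct (H y2 Hl) as [k Hk] end.
      match goal with H : eval f (cpair x y2) 0 |- _ => pose proof (IHf _ _ _ H Hk) end. discriminate.
Qed.

Ltac cps := repeat first [rewrite fst'_cpair | rewrite snd'_cpair].

Definition computes (c : code) (f : nat -> nat) := forall x, eval c x (f x).

Lemma computes_ext c f g : computes c f -> (forall x, f x = g x) -> computes c g.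
Proof. intros H E x. rewrite <- E. apply H. Qed.

Lemma c_zero : computes cZero (fun _ => 0%nat).
Proof. intro; constructor. Qed.
Lemma c_succ : computes cSucc S.
Proof. intro; constructor. Qed.
Lemma c_fst : computes cFst fst'.
Proof. intro x. pose proof (ev_fst (fst' x) (snd' x)) as H. rewrite cpair_fs in H. exact H. Qed.
Lemma c_snd : computes cSnd snd'.
Proof. intro x. pose proof (ev_snd (fst' x) (snd' x)) as H. rewrite cpair_fs in H. exact H. Qed.
Lemma c_comp f g F G : computes f F -> computes g G -> computes (cComp f g) (fun x => F (G x)).
Proof. intros HF HG x. econstructor; eauto. Qed.
Lemma c_pair f g F G : computes f F -> computes g G -> computes (cPairF f g) (fun x => cpair (F x) (G x)).
Proof. intros HF HG x. econstructor; eauto. Qed.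

Fixpoint recf (F G : nat -> nat) (x n : nat) : nat :=
  match n with
  | O => F x
  | S m => G (cpair x (cpair m (recf F G x m)))
  end.

Lemma c_rec f g F G : computes f F -> computes g G ->
  computes (cRec f g) (fun z => recf F G (fst' z) (snd' z)).
Proof.
  intros HF HG.
  assert (Hg : forall x n, eval (cRec f g) (cpair x n) (recf F G x n)).
  { intros x n; induction n; simpl.
    - constructor. apply HF.
    - econstructor; [exact IHn| apply HG]. }
  intro z. pose proof (Hg (fst' z) (snd' z)) as H. rewrite cpair_fs in H. exact H.
Qed.

Definition cid := cPairF cFst cSnd.
Lemma c_id : computes cid (fun x => x).
Proof. eapply computes_ext. apply c_pair; [apply c_fst|apply c_snd]. apply cpair_fs. Qed.

Definition csuccs (j : nat) (c : code) := Nat.iter j (cComp cSucc) c.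
Lemma c_succs j c F : computes c F -> computes (csuccs j c) (fun x => (j + F x)%nat).
Proof.
  intro H. induction j; simpl.
  - exact H.
  - eapply computes_ext. apply c_comp; [apply c_succ|exact IHj]. reflexivity.
Qed.

Definition cconst k := csuccs k cZero.
Lemma c_const k : computes (cconst k) (fun _ => k).
Proof. eapply computes_ext. apply c_succs, c_zero. intro; cbv beta; lia. Qed.

Definition cite cb c1 c2 :=
  cComp (cRec cSnd (cComp cFst cFst)) (cPairF (cPairF c1 c2) cb).
Lemma c_ite cb c1 c2 Fb F1 F2 : computes cb Fb -> computes c1 F1 -> computes c2 F2 ->
  computes (cite cb c1 c2) (fun x => match Fb x with O => F2 x | S _ => F1 x end).
Proof.
  intros Hb H1 H2. eapply computes_ext.
  - apply c_comp. apply c_rec. apply c_snd. apply c_comp; apply c_fst.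
    apply c_pair. apply c_pair; eassumption. eassumption.
  - intro x. cbv beta. rewrite fst'_cpair, snd'_cpair.
    destruct (Fb x); simpl; cps; reflexivity.
Qed.

Definition cpred c := cComp (cRec cZero (cComp cFst cSnd)) (cPairF cZero c).
Lemma c_pred c F : computes c F -> computes (cpred c) (fun x => pred (F x)).
Proof.
  intro H. eapply computes_ext.
  - apply c_comp. apply c_rec. apply c_zero. apply c_comp; [apply c_fst|apply c_snd].
    apply c_pair. apply c_zero. exact H.
  - intro x. cbv beta. rewrite fst'_cpair, snd'_cpair.
    destruct (F x); simpl; cps; reflexivity.
Qed.

Definition cmulK K c := cComp (cRec cZero (csuccs K (cComp cSnd cSnd))) (cPairF cZero c).
Lemma c_mulK K c F : computes c F -> computes (cmulK K c) (fun x => (K * F x)%nat).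
Proof.
  intro H. eapply computes_ext.
  - apply c_comp. apply c_rec. apply c_zero. apply c_succs. apply c_comp; apply c_snd.
    apply c_pair. apply c_zero. exact H.
  - intro x. cbv beta. rewrite fst'_cpair, snd'_cpair.
    induction (F x) as [|n IH]; simpl; cps; lia.
Qed.

Fixpoint is_prefix (u t : sit) : bool :=
  match u, t with
  | nil, _ => true
  | _ :: _, nil => false
  | b :: u', c :: t' => Bool.eqb b c && is_prefix u' t'
  end.

Definition sel_head := cComp cFst (cComp cFst cSnd).
Definition sel_rest := cComp cSnd (cComp cFst cSnd).
Definition ciszero c := cite c (cconst 0) (cconst 1).
Definition cis1 c := cite c (ciszero (cpred c)) (cconst 0).
Definition ctest (b : bool) := if b then cis1 sel_head else ciszero sel_head.

Fixpoint pf (u : sit) : code :=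
  match u with
  | nil => cconst 1
  | b :: u' => cComp (cRec cZero (cite (ctest b) (cComp (pf u') sel_rest) (cconst 0)))
                     (cPairF cZero cid)
  end.

Lemma c_test b : exists F, computes (ctest b) F /\
  forall X c r z, F (cpair X (cpair (cpair (enc_bool c) r) z)) = (if Bool.eqb b c then 1 else 0)%nat.
Proof.
  destruct b; eexists; split.
  - unfold cis1, ciszero. repeat first [apply c_ite | apply c_pred | apply c_const | (unfold sel_head; apply c_comp; [apply c_fst| apply c_comp; [apply c_fst|apply c_snd]])].
  - intros. cbv beta. cps. destruct c; reflexivity.
  - unfold ciszero. repeat first [apply c_ite | apply c_pred | apply c_const | (unfold sel_head; apply c_comp; [apply c_fst| apply c_comp; [apply c_fst|apply c_snd]])].
  - intros. cbv beta. cps. destruct c; reflexivity.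
Qed.

Lemma c_pf u : exists F, computes (pf u) F /\
  forall t, F (enc_sit t) = (if is_prefix u t then 1 else 0)%nat.
Proof.
  induction u as [|b u IH].
  - exists (fun _ => 1%nat). split; [apply c_const|]. reflexivity.
  - destruct IH as [F [HF HFs]]. destruct (c_test b) as [Ft [Ht Hts]].
    eexists; split.
    + simpl. apply c_comp. apply c_rec. apply c_zero. apply c_ite. exact Ht.
      apply c_comp. exact HF. unfold sel_rest. apply c_comp; [apply c_snd| apply c_comp; [apply c_fst|apply c_snd]].
      exact (c_const 0). apply c_pair. apply c_zero. apply c_id.
    + intro t. cbv beta. rewrite fst'_cpair, snd'_cpair.
      destruct t as [|c t]; simpl; [reflexivity|].
      rewrite Hts. destruct (Bool.eqb b c); simpl; [|reflexivity].
      cps. apply HFs.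
Qed.

Lemma rr_cond_scale {D} (enc : D -> nat) (q : D -> R) (sitof : D -> sit) (cx : code)
  (ex : nat -> nat) (u : sit) (K : nat) :
  computes cx ex -> (forall d, ex (enc d) = enc_sit (sitof d)) -> (1 <= K)%nat ->
  recursive_rat enc q ->
  recursive_rat enc (fun d => if is_prefix u (sitof d) then q d * / INR K else 1).
Proof.
  intros Hx Hex HK [a [b [c [Ha [Hb [Hc Hq]]]]]].
  destruct (c_pf u) as [P [HP HPs]].
  destruct Ha as [ga [[ca Hca] Hga]].
  destruct Hb as [gb [[cb Hcb] Hgb]].
  destruct Hc as [gc [[cc Hcc] Hgc]].
  exists (fun d => if is_prefix u (sitof d) then a d else 1%nat),
         (fun d => if is_prefix u (sitof d) then b d else 0%nat),
         (fun d => if is_prefix u (sitof d) then (K * c d + (K-1))%nat else 0%nat).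
  split; [|split; [|split]].
  - exists (fun x => match P (ex x) with O => 1%nat | S _ => ga x end). split.
    + exists (cite (cComp (pf u) cx) ca (cconst 1)).
      eapply computes_ext. apply c_ite. apply c_comp; eassumption. exact Hca. apply c_const.
      intro; reflexivity.
    + intro d. rewrite Hex, HPs. destruct (is_prefix u (sitof d)); auto.
  - exists (fun x => match P (ex x) with O => 0%nat | S _ => gb x end). split.
    + exists (cite (cComp (pf u) cx) cb (cconst 0)).
      eapply computes_ext. apply c_ite. apply c_comp; eassumption. exact Hcb. apply c_const.
      intro; reflexivity.
    + intro d. rewrite Hex, HPs. destruct (is_prefix u (sitof d)); auto.
  - exists (fun x => match P (ex x) with O => 0%nat | S _ => (K-1 + K * gc x)%nat end). split.
    + exists (cite (cComp (pf u) cx) (csuccs (K-1) (cmulK K cc)) (cconst 0)).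
      eapply computes_ext. apply c_ite. apply c_comp; eassumption.
      apply c_succs. apply c_mulK. exact Hcc. apply c_const.
      intro; reflexivity.
    + intro d. rewrite Hex, HPs. destruct (is_prefix u (sitof d)); auto.
      rewrite Hgc. lia.
  - intro d. destruct (is_prefix u (sitof d)).
    + rewrite Hq. replace (S (K * c d + (K - 1))) with (K * S (c d))%nat by lia.
      rewrite mult_INR. field. split; apply not_0_INR; lia.
    + simpl. field.
Qed.

Definition RR {D} (enc : D -> nat) (c1 c2 c3 : code) (q : D -> R) : Prop :=
  forall d, exists a b c, eval c1 (enc d) a /\ eval c2 (enc d) b /\ eval c3 (enc d) c /\
    q d = (INR a - INR b) / INR (S c).

Lemma rr_RR {D} (enc : D -> nat) q : recursive_rat enc q -> exists c1 c2 c3, RR enc c1 c2 c3 q.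
Proof.
  intros [a [b [c [Ha [Hb [Hc Hq]]]]]].
  destruct Ha as [ga [[ca Hca] Hga]].
  destruct Hb as [gb [[cb Hcb] Hgb]].
  destruct Hc as [gc [[cc Hcc] Hgc]].
  exists ca, cb, cc. intro d. exists (a d), (b d), (c d).
  rewrite Hga, Hgb, Hgc. split; [apply Hca|split; [apply Hcb|split; [apply Hcc|]]]. rewrite <- Hga, <- Hgb, <- Hgc. apply Hq.
Qed.

Lemma RR_unique {D} (enc : D -> nat) c1 c2 c3 q q' :
  RR enc c1 c2 c3 q -> RR enc c1 c2 c3 q' -> forall d, q d = q' d.
Proof.
  intros H H' d. destruct (H d) as [a [b [c [Ha [Hb [Hc E]]]]]].
  destruct (H' d) as [a' [b' [c' [Ha' [Hb' [Hc' E']]]]]].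
  rewrite E, E'. rewrite (eval_det _ _ _ _ Ha Ha'), (eval_det _ _ _ _ Hb Hb'), (eval_det _ _ _ _ Hc Hc').
  reflexivity.
Qed.

Definition Sig (k : rkind) (c1 c2 c3 : code) (T : process) : Prop :=
  match k with
  | ML => exists q, RR (enc_pair enc_sit) c1 c2 c3 q /\
            forall d, is_lim_seq (fun n => q (d, n)) (T d)
  | wML => exists q D, RR (enc_pair enc_sit_bool) c1 c2 c3 q /\
            (forall sx, is_lim_seq (fun n => q (sx, n)) (D (fst sx) (snd sx))) /\
            generated_by D T
  | Cr | Sr => RR enc_sit c1 c2 c3 T
  end.

Lemma gen_unique D D' T T' : (forall s x, D s x = D' s x) ->
  generated_by D T -> generated_by D' T' -> forall s, T s = T' s.
Proof.
  intros HD [H0 HS] [H0' HS'] s. induction s as [|s x IH] using rev_ind.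
  - congruence.
  - rewrite HS, HS', IH, HD. reflexivity.
Qed.

Lemma Sig_unique k c1 c2 c3 T T' : Sig k c1 c2 c3 T -> Sig k c1 c2 c3 T' -> T = T'.
Proof.
  intros H H'. apply functional_extensionality. intro s.
  destruct k; simpl in *.
  - destruct H as [q [Hq Hl]]. destruct H' as [q' [Hq' Hl']].
    pose proof (RR_unique _ _ _ _ _ _ Hq Hq') as E.
    specialize (Hl s). specialize (Hl' s).
    apply is_lim_seq_unique in Hl. apply is_lim_seq_unique in Hl'.
    assert (Lim_seq (fun n => q (s, n)) = Lim_seq (fun n => q' (s, n))).
    { apply Lim_seq_ext. intro; apply E. }
    congruence.
  - destruct H as [q [D [Hq [Hl Hg]]]]. destruct H' as [q' [D' [Hq' [Hl' Hg']]]].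
    pose proof (RR_unique _ _ _ _ _ _ Hq Hq') as E.
    apply (gen_unique D D'); auto.
    intros s0 x. specialize (Hl (s0, x)). specialize (Hl' (s0, x)).
    apply is_lim_seq_unique in Hl. apply is_lim_seq_unique in Hl'.
    assert (Lim_seq (fun n => q ((s0, x), n)) = Lim_seq (fun n => q' ((s0,x), n))).
    { apply Lim_seq_ext. intro; apply E. }
    simpl in *. congruence.
  - apply (RR_unique _ _ _ _ _ _ H H').
  - apply (RR_unique _ _ _ _ _ _ H H').
Qed.

Lemma class_Sig k T : F_class k T -> exists c1 c2 c3, Sig k c1 c2 c3 T.
Proof.
  destruct k; simpl.
  - intros [_ [q [Hq [_ Hl]]]]. destruct (rr_RR _ _ Hq) as [c1 [c2 [c3 H]]].
    exists c1, c2, c3, q. auto.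
  - intros [_ [D [_ [[q [Hq [_ Hl]]] Hg]]]]. destruct (rr_RR _ _ Hq) as [c1 [c2 [c3 H]]].
    exists c1, c2, c3, q, D. auto.
  - intros [_ [_ H]]. apply rr_RR in H. exact H.
  - intros [_ [_ H]]. apply rr_RR in H. exact H.
Qed.

Fixpoint cenc (c : code) : nat :=
  match c with
  | cZero => cpair 0 0
  | cSucc => cpair 1 0
  | cFst => cpair 2 0
  | cSnd => cpair 3 0
  | cComp f g => cpair 4 (cpair (cenc f) (cenc g))
  | cPairF f g => cpair 5 (cpair (cenc f) (cenc g))
  | cRec f g => cpair 6 (cpair (cenc f) (cenc g))
  | cMin f => cpair 7 (cenc f)
  end.

Lemma cenc_inj c1 : forall c2, cenc c1 = cenc c2 -> c1 = c2.
Proof.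
  induction c1; destruct c2; simpl; intro H; cpinj; try discriminate; auto;
    f_equal; auto.
Qed.

Definition decode (n : nat) : code :=
  match excluded_middle_informative (exists c, cenc c = n) with
  | left H => proj1_sig (constructive_indefinite_description _ H)
  | right _ => cZero
  end.

Lemma decode_cenc c : decode (cenc c) = c.
Proof.
  unfold decode. destruct excluded_middle_informative as [H|H].
  - destruct constructive_indefinite_description as [c' Hc']. simpl. apply cenc_inj; auto.
  - exfalso; eauto.
Qed.

Definition Tenum (k : rkind) (n : nat) : process :=
  let c1 := decode (fst' n) in let c2 := decode (fst' (snd' n)) in let c3 := decode (snd' (snd' n)) in
  match excluded_middle_informative (exists T, Sig k c1 c2 c3 T) with
  | left H => proj1_sig (constructive_indefinite_description _ H)
  | right _ => fun _ => 0
  end.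

Lemma Tenum_surj k T : F_class k T -> exists n, Tenum k n = T.
Proof.
  intro H. destruct (class_Sig _ _ H) as [c1 [c2 [c3 HS]]].
  exists (cpair (cenc c1) (cpair (cenc c2) (cenc c3))).
  unfold Tenum. cps. rewrite !decode_cenc.
  destruct excluded_middle_informative as [H'|H'].
  - destruct constructive_indefinite_description as [T' HT']. simpl.
    eapply Sig_unique; eauto.
  - exfalso; eauto.
Qed.

Lemma is_prefix_refl u : is_prefix u u = true.
Proof. induction u; simpl; auto. rewrite IHu, Bool.eqb_reflx. auto. Qed.

Lemma is_prefix_app u v : is_prefix u (u ++ v) = true.
Proof. induction u; simpl; auto. rewrite IHu, Bool.eqb_reflx. auto. Qed.

Lemma is_prefix_spec u t : is_prefix u t = true -> exists v, t = u ++ v.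
Proof.
  revert t; induction u as [|b u IH]; intros t H.
  - exists t; reflexivity.
  - destruct t as [|c t]; simpl in H; [discriminate|].
    apply andb_prop in H. destruct H as [H1 H2].
    apply Bool.eqb_prop in H1. subst c. destruct (IH t H2) as [v ->]. exists v. reflexivity.
Qed.

Lemma is_prefix_snoc u t x : is_prefix u t = true -> is_prefix u (t ++ x :: nil) = true.
Proof. intro H. destruct (is_prefix_spec _ _ H) as [v ->]. rewrite <- app_assoc. apply is_prefix_app. Qed.

Lemma is_prefix_len u t : is_prefix u t = true -> (length u <= length t)%nat.
Proof. intro H. destruct (is_prefix_spec _ _ H) as [v ->]. rewrite length_app. lia. Qed.

Lemma is_prefix_new u s x : is_prefix u (s ++ x :: nil) = true -> is_prefix u s = false ->
  u = s ++ x :: nil.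
Proof.
  intros H1 H2. destruct (is_prefix_spec _ _ H1) as [v Hv].
  destruct v as [|y v'] using rev_ind.
  - rewrite app_nil_r in Hv. auto.
  - rewrite app_assoc in Hv. apply app_inj_tail in Hv. destruct Hv as [-> _].
    rewrite is_prefix_app in H2. discriminate.
Qed.

Lemma is_prefix_nil u : u <> nil -> is_prefix u nil = false.
Proof. destruct u; simpl; auto. intro H; exfalso; auto. Qed.

Lemma prefix_len w n : length (prefix w n) = n.
Proof. induction n; simpl; auto. rewrite length_app, IHn. simpl. lia. Qed.

Lemma prefix_mono w N n : (N <= n)%nat -> is_prefix (prefix w N) (prefix w n) = true.
Proof.
  intro H. induction H.
  - apply is_prefix_refl.
  - simpl. apply is_prefix_snoc. auto.
Qed.

Lemma exists_K x : exists K : nat, (1 <= K)%nat /\ x <= INR K.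
Proof.
  destruct (archimed x) as [H1 _].
  assert (IZR (up x) <= INR (Z.to_nat (up x))).
  { destruct (Z_le_gt_dec 0 (up x)).
    - rewrite INR_IZR_INZ, Z2Nat.id by assumption; lra.
    - assert (IZR (up x) < 0) by (apply IZR_lt; match goal with H : (0 > up x)%Z |- _ => apply Z.gt_lt in H; exact H end). pose proof (pos_INR (Z.to_nat (up x))). lra. }
  exists (S (Z.to_nat (up x))). split; [lia|]. rewrite S_INR. lra.
Qed.

Lemma Rbar_mult_pinf a : 0 < a -> Rbar_mult (Finite a) p_infty = p_infty.
Proof. intro H. unfold Rbar_mult, Rbar_mult'. simpl.
 destruct (Rle_dec 0 a); [|lra]. destruct (Rle_lt_or_eq_dec 0 a r); [reflexivity|lra]. Qed.

Lemma LimSup_scal_ev (a : R) u v : 0 < a ->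
  (exists N, forall n, (N <= n)%nat -> v n = a * u n) ->
  LimSup_seq v = Rbar_mult a (LimSup_seq u).
Proof.
  intros Ha [N HN]. destruct (ex_LimSup_seq u) as [l Hl].
  rewrite (is_LimSup_seq_unique _ _ Hl). apply is_LimSup_seq_unique.
  eapply is_LimSup_seq_ext_loc; [| apply is_LimSup_seq_scal_pos; eauto].
  exists N. intros n Hn. symmetry. auto.
Qed.

Lemma mod_sup (p q : R) (T : process) (c : R) (u : sit) :
  0 <= p -> q <= 1 -> 0 < c -> T u * c <= 1 -> u <> nil -> (forall s, 0 <= T s) ->
  (forall s, (length u <= length s)%nat -> upper_E_nonpos p q (Defs.Delta T s)) ->
  test_process (fun t => if is_prefix u t then T t * c else 1) /\
  supermartingale (fun _ => p) (fun _ => q) (fun t => if is_prefix u t then T t * c else 1).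
Proof.
  intros Hp Hq Hc Hu Hun HT Hsup. split.
  - split.
    + intro s. destruct (is_prefix u s); [|lra]. apply Rmult_le_pos; auto; lra.
    + rewrite is_prefix_nil; auto.
  - intros s r Hr. unfold Defs.Delta, Defs.E.
    destruct (is_prefix u s) eqn:Hs.
    + rewrite !is_prefix_snoc by auto.
      pose proof (Hsup s (is_prefix_len _ _ Hs) r Hr) as H. unfold Defs.Delta, Defs.E in H.
      replace (r * (T (s ++ true :: nil) * c - T s * c) + (1 - r) * (T (s ++ false :: nil) * c - T s * c))
        with (c * (r * (T (s ++ true :: nil) - T s) + (1 - r) * (T (s ++ false :: nil) - T s))) by ring.
      nra.
    + assert (Hle : forall x, (if is_prefix u (s ++ x :: nil) then T (s ++ x :: nil) * c else 1) <= 1).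
      { intro x. destruct (is_prefix u (s ++ x :: nil)) eqn:HE; [|lra].
        rewrite <- (is_prefix_new _ _ _ HE Hs). auto. }
      pose proof (Hle true). pose proof (Hle false). nra.
Qed.

Definition Unb (k : rkind) (T : process) (w : path) : Prop :=
  match k with
  | Sr => exists tau, real_growth_function tau /\
            Rbar_le (Finite 0) (LimSup_seq (fun n => T (prefix w n) - tau n))
  | _ => LimSup_seq (fun n => T (prefix w n)) = p_infty
  end.

Lemma random_iff k lo hi w : random k lo hi w <-> ~ exists T, test_supermartingale k lo hi T /\ Unb k T w.
Proof.
  destruct k; simpl; try tauto.
  split; intros H [T HT]; apply H.
  - destruct HT as [H1 [tau [H2 H3]]]. eauto.
  - destruct HT as [tau [H1 [H2 H3]]]. eauto.
Qed.

Lemma rr_ext {D} (enc : D -> nat) f g : recursive_rat enc f -> (forall d, f d = g d) -> recursive_rat enc g.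
Proof.
  intros [a [b [c [Ha [Hb [Hc Hq]]]]]] HE0. exists a, b, c. repeat split; auto.
  intro d. rewrite <- HE0. auto.
Qed.

Lemma modify k p q w T N : 0 <= p -> q <= 1 -> (1 <= N)%nat -> F_class k T -> Unb k T w ->
  (forall s, (N <= length s)%nat -> upper_E_nonpos p q (Defs.Delta T s)) ->
  exists T', test_supermartingale k (fun _ => p) (fun _ => q) T' /\ Unb k T' w.
Proof.
  intros Hp Hq HN HF HU Hs.
  set (u := prefix w N).
  assert (Hlu : length u = N) by apply prefix_len.
  assert (Hun : u <> nil) by (intro E0; rewrite E0 in Hlu; simpl in Hlu; lia).
  assert (Hs' : forall s, (length u <= length s)%nat -> upper_E_nonpos p q (Defs.Delta T s))
    by (rewrite Hlu; auto).
  assert (HT0 : forall s, 0 <= T s) by (destruct k; simpl in HF; destruct HF as [[H _] _]; exact H).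
  assert (Hev : forall n, (N <= n)%nat -> is_prefix u (prefix w n) = true)
    by (intros; apply prefix_mono; auto).
  destruct k.
  -
    destruct (exists_K (T u)) as [K [HK HKu]].
    assert (HKp : 0 < INR K) by (apply lt_0_INR; lia).
    set (c := / INR K). assert (Hc : 0 < c) by (apply Rinv_0_lt_compat; auto).
    assert (Huc : T u * c <= 1).
    { unfold c. rewrite <- (Rinv_r (INR K)) by lra. apply Rmult_le_compat_r; [left; exact Hc|exact HKu]. }
    destruct (mod_sup p q T c u Hp Hq Hc Huc Hun HT0 Hs') as [Htp Hsup].
    exists (fun t => if is_prefix u t then T t * c else 1). split; [split|].
    + simpl. split; auto. destruct HF as [_ [q0 [Hq0 [Hm Hl]]]].
      exists (fun d => if is_prefix u (fst d) then q0 d * / INR K else 1). split; [|split].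
      * apply (rr_cond_scale (enc_pair enc_sit) q0 fst cFst fst' u K c_fst); auto.
        intro d; unfold enc_pair; apply fst'_cpair.
      * intros d n. simpl. destruct (is_prefix u d); [|lra].
        apply Rmult_le_compat_r; [fold c; lra|apply Hm].
      * intro d. simpl. destruct (is_prefix u d).
        -- exact (is_lim_seq_scal_r (fun n => q0 (d, n)) c (T d) (Hl d)).
        -- apply is_lim_seq_const.
    + exact Hsup.
    + simpl. rewrite (LimSup_scal_ev c (fun n => T (prefix w n))); auto.
      * rewrite HU. apply Rbar_mult_pinf; auto.
      * exists N; intros n Hn; rewrite Hev by auto; ring.
  -
    destruct HF as [Htp0 [D [HDn [[q0 [Hq0 [Hm Hl]]] Hg]]]].
    destruct (Req_dec (T u) 0) as [Hz|Hnz].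
    + exfalso.
      assert (Hzero : forall n, (N <= n)%nat -> T (prefix w n) = 0).
      { intros n Hn. induction Hn; [exact Hz|]. simpl. rewrite (proj2 Hg), IHHn. ring. }
      assert (LimSup_seq (fun n => T (prefix w n)) = Finite 0).
      { apply is_LimSup_seq_unique. eapply is_LimSup_seq_ext_loc; [|apply is_LimSup_seq_const].
        exists N. intros n Hn. symmetry. auto. }
      simpl in HU. congruence.
    + assert (HTu : 0 < T u) by (pose proof (HT0 u); lra).
      set (c := / T u). assert (Hc : 0 < c) by (apply Rinv_0_lt_compat; auto).
      assert (Huc : T u * c <= 1) by (unfold c; rewrite Rinv_r by lra; lra).
      destruct (mod_sup p q T c u Hp Hq Hc Huc Hun HT0 Hs') as [Htp Hsup].
      exists (fun t => if is_prefix u t then T t * c else 1). split; [split|].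
      * simpl. split; auto.
        exists (fun s x => if is_prefix u s then D s x else 1). split; [|split].
        -- intros s x. destruct (is_prefix u s); [apply HDn|lra].
        -- exists (fun d => if is_prefix u (fst (fst d)) then q0 d else 1). split; [|split].
           ++ eapply rr_ext.
              ** apply (rr_cond_scale (enc_pair enc_sit_bool) q0 (fun d => fst (fst d))
                          (cComp cFst cFst) (fun x => fst' (fst' x)) u 1).
                 apply c_comp; apply c_fst.
                 intros [[s x] n]. unfold enc_pair, enc_sit_bool. simpl. rewrite !fst'_cpair. reflexivity.
                 lia. exact Hq0.
              ** intro d. cbv beta. destruct (is_prefix u (fst (fst d))); [|reflexivity].
                 change (INR 1) with 1. rewrite Rinv_1, Rmult_1_r. reflexivity.
           ++ intros d n. simpl. destruct (is_prefix u (fst d)); [apply Hm|lra].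
           ++ intros [s x]. simpl. destruct (is_prefix u s).
              ** apply (Hl (s, x)).
              ** apply is_lim_seq_const.
        -- split.
           ++ simpl. rewrite is_prefix_nil; auto.
           ++ intros s x. destruct (is_prefix u s) eqn:Hs0.
              ** rewrite is_prefix_snoc by auto. rewrite (proj2 Hg). ring.
              ** destruct (is_prefix u (s ++ x :: nil)) eqn:Hsx; [|ring].
                 pose proof (is_prefix_new _ _ _ Hsx Hs0) as Eu. rewrite <- Eu.
                 unfold c. rewrite Rinv_r by lra. ring.
      * exact Hsup.
      * simpl. rewrite (LimSup_scal_ev c (fun n => T (prefix w n))); auto.
        -- simpl in HU. rewrite HU. apply Rbar_mult_pinf; auto.
        -- exists N; intros n Hn; rewrite Hev by auto; ring.
  -
    destruct (exists_K (T u)) as [K [HK HKu]].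
    assert (HKp : 0 < INR K) by (apply lt_0_INR; lia).
    set (c := / INR K). assert (Hc : 0 < c) by (apply Rinv_0_lt_compat; auto).
    assert (Huc : T u * c <= 1).
    { unfold c. rewrite <- (Rinv_r (INR K)) by lra. apply Rmult_le_compat_r; [left; exact Hc|exact HKu]. }
    destruct (mod_sup p q T c u Hp Hq Hc Huc Hun HT0 Hs') as [Htp Hsup].
    destruct HF as [_ [Hpos Hrr]].
    exists (fun t => if is_prefix u t then T t * c else 1). split; [split|].
    + simpl. split; [auto|split].
      * intro s. destruct (is_prefix u s); [apply Rmult_lt_0_compat; auto|lra].
      * apply (rr_cond_scale enc_sit T (fun t => t) cid (fun x => x) u K c_id); auto.
    + exact Hsup.
    + simpl. rewrite (LimSup_scal_ev c (fun n => T (prefix w n))); auto.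
      * simpl in HU. rewrite HU. apply Rbar_mult_pinf; auto.
      * exists N; intros n Hn; rewrite Hev by auto; ring.
  -
    destruct (exists_K (T u)) as [K [HK HKu]].
    assert (HKp : 0 < INR K) by (apply lt_0_INR; lia).
    assert (HK1 : 1 <= INR K) by (apply (le_INR 1) in HK; simpl in HK; lra).
    set (c := / INR K). assert (Hc : 0 < c) by (apply Rinv_0_lt_compat; auto).
    assert (Hc1 : c <= 1) by (unfold c; rewrite <- Rinv_1; apply Rinv_le_contravar; lra).
    assert (Huc : T u * c <= 1).
    { unfold c. rewrite <- (Rinv_r (INR K)) by lra. apply Rmult_le_compat_r; [left; exact Hc|exact HKu]. }
    destruct (mod_sup p q T c u Hp Hq Hc Huc Hun HT0 Hs') as [Htp Hsup].
    destruct HF as [_ [Hpos Hrr]].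
    destruct HU as [tau [[Hcomp [Hnn [Hmono Hunb]]] HL]].
    exists (fun t => if is_prefix u t then T t * c else 1). split; [split|].
    + simpl. split; [auto|split].
      * intro s. destruct (is_prefix u s); [apply Rmult_lt_0_compat; auto|lra].
      * apply (rr_cond_scale enc_sit T (fun t => t) cid (fun x => x) u K c_id); auto.
    + exact Hsup.
    + exists (fun n => tau n * c). split; [split; [|split; [|split]]|].
      * destruct Hcomp as [qt [Hqt Hb]]. exists (fun d => qt d * c). split.
        -- eapply rr_ext.
           ++ apply (rr_cond_scale (enc_pair (fun n : nat => n)) qt (fun _ => nil) cZero
                       (fun _ => 0%nat) nil K c_zero); auto.
           ++ intro d. reflexivity.
        -- intros d n.
           replace (tau d * c - qt (d, n) * c) with ((tau d - qt (d, n)) * c) by ring.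
           rewrite Rabs_mult, (Rabs_pos_eq c) by lra.
           pose proof (Hb d n). pose proof (Rabs_pos (tau d - qt (d, n))). nra.
      * intro n. apply Rmult_le_pos; auto; lra.
      * intro n. apply Rmult_le_compat_r; auto; lra.
      * intro M. destruct (Hunb (M * INR K)) as [n Hn]. exists n.
        apply (Rmult_lt_reg_r (INR K)); auto. unfold c.
        rewrite Rmult_assoc, Rinv_l, Rmult_1_r by lra. lra.
      * rewrite (LimSup_scal_ev c (fun n => T (prefix w n) - tau n)); auto.
        -- destruct (LimSup_seq (fun n => T (prefix w n) - tau n)) as [l| |].
           ++ simpl in *. nra.
           ++ rewrite Rbar_mult_pinf; simpl; auto.
           ++ simpl in HL. contradiction.
        -- exists N; intros n Hn; rewrite Hev by auto; ring.
Qed.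

Definition fails k p q n s := ~ upper_E_nonpos p q (Defs.Delta (Tenum k n) s).

Definition sel k p q n (b : nat) : option sit :=
  match excluded_middle_informative (exists s, (b < length s)%nat /\ fails k p q n s) with
  | left H => Some (proj1_sig (constructive_indefinite_description _ H))
  | right _ => None
  end.

Fixpoint Bd k p q n : nat :=
  match n with
  | O => O
  | S m => match sel k p q m (Bd k p q m) with
           | Some s => length s
           | None => Bd k p q m
           end
  end.

Definition phi k p q (s : sit) : R :=
  if excluded_middle_informative
       (exists n, sel k p q n (Bd k p q n) = Some s /\ Defs.E p (Defs.Delta (Tenum k n) s) > 0)
  then p else q.

Lemma sel_some k p q n b s : sel k p q n b = Some s -> (b < length s)%nat /\ fails k p q n s.
Proof.
  unfold sel. destruct excluded_middle_informative as [H|H]; [|discriminate].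
  destruct constructive_indefinite_description as [s' Hs']. simpl. intro E0. injection E0 as <-. auto.
Qed.

Lemma sel_none k p q n b : sel k p q n b = None -> forall s, (b < length s)%nat -> ~ fails k p q n s.
Proof.
  unfold sel. destruct excluded_middle_informative as [H|H]; [discriminate|].
  intros _ s Hs Hf. apply H. eauto.
Qed.

Lemma Bd_S k p q n : (Bd k p q n <= Bd k p q (S n))%nat.
Proof.
  simpl. destruct (sel k p q n (Bd k p q n)) eqn:E0; [|lia].
  apply sel_some in E0. lia.
Qed.

Lemma Bd_le k p q n m : (n <= m)%nat -> (Bd k p q n <= Bd k p q m)%nat.
Proof.
  intro H. induction H; [lia|]. pose proof (Bd_S k p q m). lia.
Qed.

Lemma sel_uniq k p q n m s : sel k p q n (Bd k p q n) = Some s -> sel k p q m (Bd k p q m) = Some s -> n = m.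
Proof.
  intros Hn Hm.
  assert (Hlt : forall a b, sel k p q a (Bd k p q a) = Some s -> sel k p q b (Bd k p q b) = Some s -> (a < b)%nat -> False).
  { intros a b Ha Hb Hab.
    assert (E1 : Bd k p q (S a) = length s) by (simpl; rewrite Ha; reflexivity).
    pose proof (Bd_le k p q (S a) b Hab). apply sel_some in Hb. lia. }
  destruct (Nat.lt_trichotomy n m) as [H|[H|H]]; auto; exfalso; eauto.
Qed.

Lemma fails_split p q f : ~ upper_E_nonpos p q f -> Defs.E p f > 0 \/ Defs.E q f > 0.
Proof.
  intro H. destruct (Rlt_le_dec 0 (Defs.E p f)) as [H1|H1]; [left; lra|].
  destruct (Rlt_le_dec 0 (Defs.E q f)) as [H2|H2]; [right; lra|].
  exfalso. apply H. intros r Hr. unfold Defs.E in *.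
  destruct (Rle_dec (f false) (f true)) as [Hle|Hle]; nra.
Qed.

Theorem corollary14 (k : rkind) (p q : R) (w : path) :
  0 <= p -> p <= q -> q <= 1 ->
  (random k (fun _ => p) (fun _ => q) w <->
   exists phi : sit -> R,
     (forall s, p <= phi s <= q) /\ random k phi phi w).
Proof.
  intros Hp Hpq Hq. split.
  - intro Hr. exists (phi k p q). split.
    { intro s. unfold phi. destruct excluded_middle_informative; lra. }
    apply random_iff. apply random_iff in Hr. intros [T [[HF Hsup] HU]].
    destruct (Tenum_surj k T HF) as [n Hn].
    destruct (sel k p q n (Bd k p q n)) as [s|] eqn:Hsel.
    + destruct (sel_some _ _ _ _ _ _ Hsel) as [Hlen Hf]. unfold fails in Hf. rewrite Hn in Hf.
      assert (Hs : Defs.E (phi k p q s) (Defs.Delta T s) <= 0) by (apply (Hsup s); lra).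
      destruct (fails_split _ _ _ Hf) as [Ep|Eq].
      * unfold phi in Hs. destruct excluded_middle_informative as [_|Hno]; [lra|].
        apply Hno. exists n. rewrite Hn. auto.
      * unfold phi in Hs. destruct excluded_middle_informative as [[m [Hm Em]]|_]; [|lra].
        pose proof (sel_uniq _ _ _ _ _ _ Hsel Hm). subst m. rewrite Hn in Em. lra.
    + apply Hr. apply (modify k p q w T (S (Bd k p q n))); auto; [lia|].
      intros s Hs. apply NNPP. intro Hf. apply (sel_none _ _ _ _ _ Hsel s); [lia|].
      unfold fails. rewrite Hn. auto.
  - intros [ph [Hph Hr]]. apply random_iff in Hr. apply random_iff.
    intros [T [[HF Hsup] HU]]. apply Hr. exists T. split; [split|]; auto.
    intros s r Hr'. apply (Hsup s). specialize (Hph s). simpl. lra.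
Qed.
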